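(* Let $\flat\in\{>,<\}$. For $\imath\in\{1,\dots,2n-1\}$, the set $\{r\in\mathbb Z\mid(\imath,\frac r2)\in\widehat I^{\mathrm{tw},\flat}_\xi\}$ is a $4$-segment if $\imath\ne n$ and a $2$-segment if $\imath=n$. (For $k\in\mathbb Z_{>0}$, a $k$-segment is a set $\{\ell+sk\mid s=0,\dots,N\}$ with $\ell\in\mathbb Z$, $N\in\mathbb Z_{\ge0}$.) Moreover, the following hold in $\Upsilon_{[\mathcal Q^\flat]}$, whose vertices are labelled by $\overline I^{\mathrm{tw},\flat}_\xi$. - (1) Let $i\le n-2$ and suppose $(i,r-2),(i,r+2)\in\overline I^{\mathrm{tw},\flat}_\xi$. Then $(i-1,r),(i+1,r)\in\overline I^{\mathrm{tw},\flat}_\xi$ (ignoring $(0,r)$ when $i=1$). There are arrows from $(i,r-2)$ to these vertices and from them to $(i,r+2)$, and these are all the arrows exiting $(i,r-2)$, respectively entering $(i,r+2)$. - (2) Suppose $(n-1,r-2),(n-1,r+2)\in\overline I^{\mathrm{tw},\flat}_\xi$. Then $(n-2,r),(n,r-1),(n,r+1)\in\overline I^{\mathrm{tw},\flat}_\xi$ (ignoring $(0,r)$ when $n=2$). There are arrows from $(n-1,r-2)$ to $(n-2,r)$ and $(n,r-1)$, and arrows from $(n-2,r)$ and $(n,r+1)$ to $(n-1,r+2)$. These are all the arrows exiting $(n-1,r-2)$, respectively entering $(n-1,r+2)$. - (3) Suppose $(n,r-1),(n,r+1)\in\overline I^{\mathrm{tw},\flat}_\xi$. Then $(n-1,r)\in\overline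 I^{\mathrm{tw},\flat}_\xi$. There are arrows from $(n,r-1)$ to $(n-1,r)$ and from $(n-1,r)$ to $(n,r+1)$, and these are all the arrows exiting $(n,r-1)$, respectively entering $(n,r+1)$.
   Context: Fix $n\ge2$. Let $\mathcal Q$ be a quiver with underlying graph the Dynkin diagram of type $\mathrm A_{2n-2}$ (vertices $1,\dots,2n-2$, edges $\{i,i+1\}$), and $\xi$ a height function: $\xi(j)=\xi(i)+1$ for each arrow $i\to j$. Let $\widehat I_\xi=\{(i,p):1\le i\le 2n-2,\ p\equiv\xi(i)\ \mathrm{mod}\ 2,\ \xi(2n-1-i)-(2n-1)<p\le\xi(i)\}$. This is the vertex set of the Auslander–Reiten quiver $\Gamma_{\mathcal Q}$, whose arrows are $(j,p-1)\to(i,p)$ for all $|i-j|=1$ with both endpoints in $\widehat I_\xi$. Let $\phi(i,p)=(i,p)$ for $i\le n-1$ and $\phi(i,p)=(i+1,p)$ for $i\ge n$. The twisted Auslander–Reiten quiver $\Upsilon_{[\mathcal Q^\flat]}$ ($\flat\in\{>,<\}$) has vertex set $\widehat I^{\mathrm{tw},\flat}_\xi$ consisting of: - $\phi(\widehat I_\xi)$; - a vertex $(n,p-\frac12)$ for each arrow $(j,p-1)\to(i,p)$ of $\Gamma_{\mathcal Q}$ with $\{i,j\}=\{n-1,n\}$; - one extra vertex: $(n,r_M+\frac12)$ if $\flat={>}$, or $(n,r_m-\frac12)$ if $\flat={<}$, where $r_M$, $r_m$ are the max and min of $\{p:(n-1,p)\text{ or }(n,p)\in\widehat I_\xi\}$.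 Its arrows are: - $\phi(j,p-1)\to\phi(i,p)$ for each arrow of $\Gamma_{\mathcal Q}$ with $\{i,j\}\ne\{n-1,n\}$; - $\phi(j,p-1)\to(n,p-\frac12)\to\phi(i,p)$ for each arrow $(j,p-1)\to(i,p)$ of $\Gamma_{\mathcal Q}$ with $\{i,j\}=\{n-1,n\}$; - if $\flat={>}$, the arrow $v_M\to(n,r_M+\frac12)$, where $v_M$ is the unique vertex of $\phi(\widehat I_\xi)$ with first coordinate in $\{n-1,n+1\}$ and second coordinate $r_M$; - if $\flat={<}$, the arrow $(n,r_m-\frac12)\to v_m$, where $v_m$ is the unique vertex of $\phi(\widehat I_\xi)$ with first coordinate in $\{n-1,n+1\}$ and second coordinate $r_m$. Vertices are relabelled by the injective map $(\imath,s)\mapsto(\imath,2s)$ if $\imath\le n$ and $(\imath,s)\mapsto(2n-\imath,2s)$ if $\imath>n$. The image is $\overline I^{\mathrm{tw},\flat}_\xi\subset\{1,\dots,n\}\times\mathbb Z$. *)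

(* Defs.v *)
From Stdlib Require Import ZArith Lia.
Open Scope Z_scope.

Inductive flat := Gt | Lt.

(* Quiver Q on A_{2n-2}: Q i = true means the arrow i -> i+1, false means i+1 -> i
   (for 1 <= i <= 2n-3).  xi is a height function for Q. *)
Definition is_height (n : Z) (Q : Z -> bool) (xi : Z -> Z) : Prop :=
  forall i, 1 <= i <= 2*n-3 ->
    if Q i then xi (i+1) = xi i + 1 else xi i = xi (i+1) + 1.

Definition Ihat (n : Z) (xi : Z -> Z) (i p : Z) : Prop :=
  1 <= i <= 2*n-2 /\ Z.even p = Z.even (xi i) /\
  xi (2*n-1-i) - (2*n-1) < p /\ p <= xi i.

Definition GammaArr (n : Z) (xi : Z -> Z) (j i p : Z) : Prop :=
  Ihat n xi j (p-1) /\ Ihat n xi i p /\ (i = j + 1 \/ j = i + 1).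

Definition special_pair (n i j : Z) : Prop :=
  (i = n-1 /\ j = n) \/ (i = n /\ j = n-1).

Definition phi1 (n i : Z) : Z := if i <=? n-1 then i else i+1.

Definition midP (n : Z) (xi : Z -> Z) (p : Z) : Prop :=
  Ihat n xi (n-1) p \/ Ihat n xi n p.
Definition is_rM n xi p := midP n xi p /\ forall q, midP n xi q -> q <= p.
Definition is_rm n xi p := midP n xi p /\ forall q, midP n xi q -> p <= q.

(* Vertices of Upsilon in DOUBLED coordinates: (k, r) stands for (k, r/2). *)
Definition Itw (n : Z) (xi : Z -> Z) (f : flat) (v : Z * Z) : Prop :=
  (exists i p, Ihat n xi i p /\ v = (phi1 n i, 2*p))
  \/ (exists j i p, GammaArr n xi j i p /\ special_pair n i j /\ v = (n, 2*p-1))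
  \/ (f = Gt /\ exists p, is_rM n xi p /\ v = (n, 2*p+1))
  \/ (f = Lt /\ exists p, is_rm n xi p /\ v = (n, 2*p-1)).

Definition UpsArr (n : Z) (xi : Z -> Z) (f : flat) (a b : Z * Z) : Prop :=
  (exists j i p, GammaArr n xi j i p /\ ~ special_pair n i j /\
     a = (phi1 n j, 2*(p-1)) /\ b = (phi1 n i, 2*p))
  \/ (exists j i p, GammaArr n xi j i p /\ special_pair n i j /\
     ((a = (phi1 n j, 2*(p-1)) /\ b = (n, 2*p-1)) \/
      (a = (n, 2*p-1) /\ b = (phi1 n i, 2*p))))
  \/ (f = Gt /\ exists i p, is_rM n xi p /\ (i = n-1 \/ i = n) /\ Ihat n xi i p /\
        a = (phi1 n i, 2*p) /\ b = (n, 2*p+1))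
  \/ (f = Lt /\ exists i p, is_rm n xi p /\ (i = n-1 \/ i = n) /\ Ihat n xi i p /\
        a = (n, 2*p-1) /\ b = (phi1 n i, 2*p)).

Definition relab (n : Z) (v : Z * Z) : Z * Z :=
  if fst v <=? n then v else (2*n - fst v, snd v).

Definition Ibar n xi f (v : Z * Z) : Prop :=
  exists u, Itw n xi f u /\ relab n u = v.
Definition Arr n xi f (v w : Z * Z) : Prop :=
  exists u u', Itw n xi f u /\ Itw n xi f u' /\ relab n u = v /\ relab n u' = w /\
               UpsArr n xi f u u'.

Definition is_segment (k : Z) (S : Z -> Prop) : Prop :=
  exists l N, 0 <= N /\ forall r, S r <-> exists s, 0 <= s <= N /\ r = l + s*k.

(* Main.v *)
Require Import Defs.
From Stdlib Require Import ZArith Lia.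
Open Scope Z_scope.

Ltac zl := Z.to_euclidean_division_equations; lia.



Lemma even_mod x y : Z.even x = Z.even y <-> x mod 2 = y mod 2.
Proof.
  rewrite !Zmod_even. destruct (Z.even x), (Z.even y); split; congruence.
Qed.

Lemma Ihat_iff n xi i p : Ihat n xi i p <->
  1 <= i <= 2*n-2 /\ p mod 2 = xi i mod 2 /\ xi (2*n-1-i) - (2*n-1) < p /\ p <= xi i.
Proof. unfold Ihat. rewrite even_mod. tauto. Qed.

Definition adj n (xi : Z -> Z) := forall i, 1 <= i <= 2*n-3 ->
  xi (i+1) = xi i + 1 \/ xi i = xi (i+1) + 1.

Lemma height_adj n Q xi : is_height n Q xi -> adj n xi.
Proof.
  intros H i Hi. specialize (H i Hi). destruct (Q i); lia.
Qed.

Lemma dist_up n xi : adj n xi -> forall d, 0 <= d -> forall i, 1 <= i -> i + d <= 2*n-2 ->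
  Z.abs (xi (i+d) - xi i) <= d /\ (xi (i+d) - xi i - d) mod 2 = 0.
Proof.
  intros Ha d Hd. pattern d. apply natlike_ind; [| |exact Hd].
  - intros i _ _. rewrite Z.add_0_r. split; [lia|]. rewrite Z.sub_diag. reflexivity.
  - intros x Hx IH i Hi Hid.
    destruct (IH i Hi ltac:(lia)) as [H1 H2].
    assert (E : i + Z.succ x = (i + x) + 1) by lia. rewrite E.
    destruct (Ha (i+x) ltac:(lia)) as [E2|E2]; rewrite ?E2 in *; split; try zl.
Qed.

Lemma distg n xi : adj n xi -> forall x y, 1 <= x <= 2*n-2 -> 1 <= y <= 2*n-2 ->
  Z.abs (xi x - xi y) <= Z.abs (x - y) /\ (xi x - xi y - (x - y)) mod 2 = 0.
Proof.
  intros Ha x y Hx Hy. destruct (Z.le_ge_cases x y).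
  - destruct (dist_up n xi Ha (y - x) ltac:(lia) x ltac:(lia) ltac:(lia)) as [H1 H2].
    replace (x + (y - x)) with y in * by lia. split; zl.
  - destruct (dist_up n xi Ha (x - y) ltac:(lia) y ltac:(lia) ltac:(lia)) as [H1 H2].
    replace (y + (x - y)) with x in * by lia. split; zl.
Qed.

Lemma phi1_le n i : i <= n-1 -> phi1 n i = i.
Proof. intros; unfold phi1; destruct (Z.leb_spec i (n-1)); lia. Qed.
Lemma phi1_ge n i : n <= i -> phi1 n i = i+1.
Proof. intros; unfold phi1; destruct (Z.leb_spec i (n-1)); lia. Qed.
Lemma relab_le n a b : a <= n -> relab n (a,b) = (a,b).
Proof. intros; unfold relab; simpl; destruct (Z.leb_spec a n); auto; lia. Qed.
Lemma relab_gt n a b : n < a -> relab n (a,b) = (2*n-a,b).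
Proof. intros; unfold relab; simpl; destruct (Z.leb_spec a n); auto; lia. Qed.
Lemma phi1_cases n i : (i <= n-1 /\ phi1 n i = i) \/ (n <= i /\ phi1 n i = i+1).
Proof. destruct (Z.le_gt_cases i (n-1)); [left|right]; split; auto using phi1_le, phi1_ge with zarith; apply phi1_ge; lia. Qed.
Lemma relab_cases n a b : (a <= n /\ relab n (a,b) = (a,b)) \/ (n < a /\ relab n (a,b) = (2*n-a,b)).
Proof. destruct (Z.le_gt_cases a n); [left|right]; split; auto using relab_le, relab_gt. Qed.

Lemma diamond n xi : adj n xi -> forall i k p, 1 <= k <= 2*n-2 -> (k = i-1 \/ k = i+1) ->
  Ihat n xi i (p-1) -> Ihat n xi i (p+1) -> Ihat n xi k p.
Proof.
  intros Ha i k p Hk Hki H1 H2. rewrite Ihat_iff in *.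
  destruct H1 as (Hi & P1 & L1 & U1). destruct H2 as (_ & P2 & L2 & U2).
  pose proof (distg n xi Ha i k Hi Hk).
  pose proof (distg n xi Ha (2*n-1-i) (2*n-1-k) ltac:(lia) ltac:(lia)).
  split; [lia|]. split; [zl|]. split; zl.
Qed.


Lemma pair_inj {A B : Type} (a c : A) (b d : B) : (a,b) = (c,d) -> a = c /\ b = d.
Proof. intros H; inversion H; auto. Qed.

Lemma adj_mid n xi : 2 <= n -> adj n xi -> xi n = xi (n-1) + 1 \/ xi (n-1) = xi n + 1.
Proof. intros Hn Ha. destruct (Ha (n-1) ltac:(lia)); replace (n-1+1) with n in *; lia. Qed.

Lemma midP_iff n xi q : 2 <= n -> adj n xi ->
  midP n xi q <-> Z.max (xi (n-1)) (xi n) - 2*n + 2 <= q <= Z.max (xi (n-1)) (xi n).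
Proof.
  intros Hn Ha. pose proof (adj_mid n xi Hn Ha). unfold midP. rewrite !Ihat_iff.
  replace (2*n-1-(n-1)) with n by lia. replace (2*n-1-n) with (n-1) by lia.
  split; intros; zl.
Qed.

Lemma mid_arr n xi p : 2 <= n -> adj n xi ->
  Z.max (xi (n-1)) (xi n) - 2*n + 3 <= p <= Z.max (xi (n-1)) (xi n) ->
  exists j i, GammaArr n xi j i p /\ special_pair n i j.
Proof.
  intros Hn Ha Hp. pose proof (adj_mid n xi Hn Ha). unfold GammaArr, special_pair.
  destruct (Z.eq_dec (p mod 2) (xi n mod 2)).
  - exists (n-1), n. rewrite !Ihat_iff.
    replace (2*n-1-(n-1)) with n by lia. replace (2*n-1-n) with (n-1) by lia.
    split; [|lia]. zl.
  - exists n, (n-1). rewrite !Ihat_iff.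
    replace (2*n-1-(n-1)) with n by lia. replace (2*n-1-n) with (n-1) by lia.
    split; [|lia]. zl.
Qed.

Lemma mid_arr_inv n xi j i p : 2 <= n -> adj n xi ->
  GammaArr n xi j i p -> special_pair n i j ->
  Z.max (xi (n-1)) (xi n) - 2*n + 3 <= p <= Z.max (xi (n-1)) (xi n).
Proof.
  intros Hn Ha [H1 [H2 _]] Hs.
  assert (midP n xi (p-1)) by (unfold midP, special_pair in *; destruct Hs as [[-> ->]|[-> ->]]; auto).
  assert (midP n xi p) by (unfold midP, special_pair in *; destruct Hs as [[-> ->]|[-> ->]]; auto).
  rewrite midP_iff in * by auto. lia.
Qed.

Lemma is_rM_iff n xi p : 2 <= n -> adj n xi -> is_rM n xi p <-> p = Z.max (xi (n-1)) (xi n).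
Proof.
  intros Hn Ha. unfold is_rM. split.
  - intros [H1 H2]. rewrite midP_iff in H1 by auto.
    specialize (H2 (Z.max (xi (n-1)) (xi n))). rewrite midP_iff in H2 by auto. lia.
  - intros ->. rewrite midP_iff by auto. split; [lia|]. intros q Hq. rewrite midP_iff in Hq by auto. lia.
Qed.

Lemma is_rm_iff n xi p : 2 <= n -> adj n xi -> is_rm n xi p <-> p = Z.max (xi (n-1)) (xi n) - 2*n + 2.
Proof.
  intros Hn Ha. unfold is_rm. split.
  - intros [H1 H2]. rewrite midP_iff in H1 by auto.
    specialize (H2 (Z.max (xi (n-1)) (xi n) - 2*n+2)). rewrite midP_iff in H2 by auto. lia.
  - intros ->. rewrite midP_iff by auto. split; [lia|]. intros q Hq. rewrite midP_iff in Hq by auto. lia.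
Qed.

Lemma Itw_n_inv n xi f s : 2 <= n -> adj n xi -> Itw n xi f (n, s) ->
  (exists p, s = 2*p-1 /\ Z.max (xi (n-1)) (xi n) - 2*n + 3 <= p <= Z.max (xi (n-1)) (xi n))
  \/ (f = Gt /\ s = 2 * Z.max (xi (n-1)) (xi n) + 1)
  \/ (f = Lt /\ s = 2 * (Z.max (xi (n-1)) (xi n) - 2*n + 2) - 1).
Proof.
  intros Hn Ha [H|[H|[H|H]]].
  - destruct H as (i & p & Hi & E). apply pair_inj in E as [E1 E2].
    destruct (phi1_cases n i) as [[? E]|[? E]]; lia.
  - destruct H as (j & i & p & G & S & E). apply pair_inj in E as [_ E].
    left. exists p. split; [lia|]. eapply mid_arr_inv; eauto.
  - destruct H as (-> & p & Hp & E). apply pair_inj in E as [_ E]. rewrite is_rM_iff in Hp by auto.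
    right; left; split; auto; lia.
  - destruct H as (-> & p & Hp & E). apply pair_inj in E as [_ E]. rewrite is_rm_iff in Hp by auto.
    right; right; split; auto; lia.
Qed.

Lemma Itw_lo_iff n xi f k r : 1 <= k <= n-1 ->
  Itw n xi f (k, r) <-> exists p, Ihat n xi k p /\ r = 2*p.
Proof.
  intros Hk. split.
  - intros [H|[H|[H|H]]].
    + destruct H as (i & p & Hi & E). apply pair_inj in E as [E1 E2].
      destruct (phi1_cases n i) as [[? E]|[? E]]; [|lia].
      exists p. rewrite E in E1. subst. auto.
    + destruct H as (j & i & p & G & S & E). apply pair_inj in E as [E _]. lia.
    + destruct H as (_ & p & Hp & E). apply pair_inj in E as [E _]. lia.
    + destruct H as (_ & p & Hp & E). apply pair_inj in E as [E _]. lia.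
  - intros (p & Hp & ->). left. exists k, p. split; auto. rewrite phi1_le by lia. auto.
Qed.

Lemma Itw_hi_iff n xi f k r : n+1 <= k ->
  Itw n xi f (k, r) <-> exists p, Ihat n xi (k-1) p /\ r = 2*p.
Proof.
  intros Hk. split.
  - intros [H|[H|[H|H]]].
    + destruct H as (i & p & Hi & E). apply pair_inj in E as [E1 E2].
      destruct (phi1_cases n i) as [[? E]|[? E]]; [lia|].
      exists p. rewrite E in E1. replace (k-1) with i by lia. subst. auto.
    + destruct H as (j & i & p & G & S & E). apply pair_inj in E as [E _]. lia.
    + destruct H as (_ & p & Hp & E). apply pair_inj in E as [E _]. lia.
    + destruct H as (_ & p & Hp & E). apply pair_inj in E as [E _]. lia.
  - intros (p & Hp & ->). left. exists (k-1), p. split; auto. rewrite phi1_ge by lia.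
    f_equal; lia.
Qed.

Lemma row_segment n xi i : 2 <= n -> adj n xi -> 1 <= i <= 2*n-2 ->
  is_segment 4 (fun r => exists p, Ihat n xi i p /\ r = 2*p).
Proof.
  intros Hn Ha Hi. pose proof (distg n xi Ha i (2*n-1-i) Hi ltac:(lia)) as [D1 D2].
  set (lo := xi (2*n-1-i) - (2*n-1) + 2).
  exists (2*lo), ((xi i - lo)/2). split; [zl|]. intros r. split.
  - intros (p & Hp & ->). rewrite Ihat_iff in Hp. exists ((p - lo)/2). split; zl.
  - intros (s & Hs & ->). exists (lo + 2*s). rewrite Ihat_iff. split; [|lia]. split; [lia|]. zl.
Qed.



Ltac norm := repeat match goal with
 | H : exists _, _ |- _ => destruct H
 | H : _ /\ _ |- _ => destruct H
 | H : _ \/ _ |- _ => destruct H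
 | H : (_,_) = (_,_) |- _ => apply pair_inj in H; destruct H
 | H : ?u = (_,_) |- _ => is_var u; subst u
 | H : (_,_) = ?u |- _ => is_var u; subst u
 | H : context [relab ?n (?a, ?b)] |- _ =>
     destruct (relab_cases n a b) as [[? E]|[? E]]; rewrite E in *; clear E
 | H : context [phi1 ?n ?x] |- _ =>
     destruct (phi1_cases n x) as [[? E]|[? E]]; rewrite E in *; clear E
 end.

Ltac rsimp := repeat (first [rewrite phi1_le by lia | rewrite phi1_ge by lia
   | rewrite relab_le by lia | rewrite relab_gt by lia]); f_equal; lia.

Lemma Ibar_lo_inv n xi f i s : i <= n-1 -> Ibar n xi f (i, s) ->
  exists i0 p, Ihat n xi i0 p /\ s = 2*p /\ (i0 = i \/ i0 = 2*n-1-i).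
Proof.
  intros Hi [u [Hu Hr]]. unfold Itw in Hu.
  destruct Hu as [H|[H|[H|H]]]; norm; try lia.
  all: match goal with H : Ihat _ _ ?a ?b |- _ => exists a, b; split; [exact H|lia] end.
Qed.

Lemma Ibar_n_inv n xi f s : Ibar n xi f (n, s) -> Itw n xi f (n, s).
Proof.
  intros [[a b] [Hu Hr]]. destruct (relab_cases n a b) as [[? E]|[? E]]; rewrite E in Hr;
  apply pair_inj in Hr as [E1 E2]; [subst; auto | lia].
Qed.

Lemma Arr_gen n xi f j i p q v w : q = p-1 -> Ihat n xi j q -> Ihat n xi i p ->
  (i = j+1 \/ j = i+1) -> ~ special_pair n i j ->
  relab n (phi1 n j, 2*q) = v -> relab n (phi1 n i, 2*p) = w -> Arr n xi f v w.
Proof.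
  intros -> Hj Hi Ha Hs Hv Hw. exists (phi1 n j, 2*(p-1)), (phi1 n i, 2*p).
  split; [left; exists j, (p-1); auto|]. split; [left; exists i, p; auto|].
  do 2 (split; auto). left. exists j, i, p. split; [split; [|split]; auto|split; auto].
Qed.

Lemma Arr_mid1 n xi f j i p q v w : q = p-1 -> Ihat n xi j q -> Ihat n xi i p ->
  special_pair n i j ->
  relab n (phi1 n j, 2*q) = v -> (n, 2*p-1) = w -> Arr n xi f v w.
Proof.
  intros -> Hj Hi Hs Hv Hw. exists (phi1 n j, 2*(p-1)), (n, 2*p-1).
  assert (G : GammaArr n xi j i p) by (split; [|split]; auto; unfold special_pair in Hs; lia).
  split; [left; exists j, (p-1); auto|]. split; [right; left; exists j, i, p; auto|].
  split; auto. split; [rewrite relab_le by lia; auto|].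
  right; left. exists j, i, p. auto.
Qed.

Lemma Arr_mid2 n xi f j i p q v w : q = p-1 -> Ihat n xi j q -> Ihat n xi i p ->
  special_pair n i j ->
  (n, 2*p-1) = v -> relab n (phi1 n i, 2*p) = w -> Arr n xi f v w.
Proof.
  intros -> Hj Hi Hs Hv Hw. exists (n, 2*p-1), (phi1 n i, 2*p).
  assert (G : GammaArr n xi j i p) by (split; [|split]; auto; unfold special_pair in Hs; lia).
  split; [right; left; exists j, i, p; auto|]. split; [left; exists i, p; auto|].
  split; [rewrite relab_le by lia; auto|]. split; auto.
  right; left. exists j, i, p. auto.
Qed.

Lemma Arr_Gt n xi f i p v w : f = Gt -> is_rM n xi p -> (i = n-1 \/ i = n) -> Ihat n xi i p ->
  relab n (phi1 n i, 2*p) = v -> (n, 2*p+1) = w -> Arr n xi f v w.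
Proof.
  intros Hf HM Hi Hp Hv Hw. exists (phi1 n i, 2*p), (n, 2*p+1).
  split; [left; exists i, p; auto|]. split; [right; right; left; split; auto; exists p; auto|].
  split; auto. split; [rewrite relab_le by lia; auto|].
  right; right; left. split; auto. exists i, p. auto.
Qed.

Lemma Arr_Lt n xi f i p v w : f = Lt -> is_rm n xi p -> (i = n-1 \/ i = n) -> Ihat n xi i p ->
  (n, 2*p-1) = v -> relab n (phi1 n i, 2*p) = w -> Arr n xi f v w.
Proof.
  intros Hf HM Hi Hp Hv Hw. exists (n, 2*p-1), (phi1 n i, 2*p).
  split; [right; right; right; split; auto; exists p; auto|]. split; [left; exists i, p; auto|].
  split; [rewrite relab_le by lia; auto|]. split; auto.
  right; right; right. split; auto. exists i, p. auto.
Qed.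

Lemma Ibar_v n xi f i p v : Ihat n xi i p -> relab n (phi1 n i, 2*p) = v -> Ibar n xi f v.
Proof. intros H E. exists (phi1 n i, 2*p). split; auto. left. exists i, p. auto. Qed.

Lemma Ibar_mid n xi f j i p q v : q = p-1 -> Ihat n xi j q -> Ihat n xi i p ->
  special_pair n i j -> (n, 2*p-1) = v -> Ibar n xi f v.
Proof.
  intros -> Hj Hi Hs <-. exists (n, 2*p-1). split; [|rewrite relab_le by lia; auto].
  right; left. exists j, i, p. split; [|split; auto]. split; [|split]; auto; unfold special_pair in Hs; lia.
Qed.

Lemma seg_ext k (P P' : Z -> Prop) : (forall r, P r <-> P' r) -> is_segment k P' -> is_segment k P.
Proof.
  intros E (l & N & HN & H). exists l, N. split; auto. intros r. rewrite E. apply H.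
Qed.



Lemma same_row n xi i i0 i1 p q : adj n xi -> 1 <= i <= n-1 ->
  Ihat n xi i0 p -> Ihat n xi i1 q -> q = p + 2 ->
  (i0 = i \/ i0 = 2*n-1-i) -> (i1 = i \/ i1 = 2*n-1-i) -> i0 = i1.
Proof.
  intros Ha Hi Hp Hq Eq H0 H1.
  destruct (distg n xi Ha i (2*n-1-i)) as [D1 D2]; try lia.
  rewrite Ihat_iff in Hp, Hq.
  destruct H0, H1; subst; try lia; exfalso;
  destruct Hp as (_ & Pp & _); destruct Hq as (_ & Pq & _); zl.
Qed.

Lemma part1 n xi f : 2 <= n -> adj n xi -> forall i r, i <= n-2 ->
  Ibar n xi f (i, r-2) -> Ibar n xi f (i, r+2) ->
     (forall k, (k = i-1 \/ k = i+1) -> 1 <= k ->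
        Ibar n xi f (k, r) /\ Arr n xi f (i, r-2) (k, r) /\ Arr n xi f (k, r) (i, r+2))
     /\ (forall w, Arr n xi f (i, r-2) w ->
           exists k, (k = i-1 \/ k = i+1) /\ 1 <= k /\ w = (k, r))
     /\ (forall w, Arr n xi f w (i, r+2) ->
           exists k, (k = i-1 \/ k = i+1) /\ 1 <= k /\ w = (k, r)).
Proof.
  intros Hn Ha i r Hi H1 H2. split; [|split].
  - intros k Hk Hk1.
    apply Ibar_lo_inv in H1; [|lia]. apply Ibar_lo_inv in H2; [|lia].
    destruct H1 as (i0 & p & Hp & Er & Hi0). destruct H2 as (i1 & q & Hq & Eq & Hi1).
    assert (Hr0 : 1 <= i0 <= 2*n-2) by (rewrite Ihat_iff in Hp; lia).
    assert (i0 = i1) by (apply (same_row n xi i i0 i1 p q); auto; lia). subst i1.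
    destruct Hi0 as [-> | ->].
    + assert (Hd : Ihat n xi k (p+1)).
      { apply (diamond n xi Ha i); [lia|lia| replace (p+1-1) with p by lia; auto
          | replace (p+1+1) with q by lia; auto]. }
      split; [|split].
      * eapply Ibar_v; [exact Hd| rsimp].
      * eapply (Arr_gen n xi f i k (p+1) p); [lia|exact Hp|exact Hd|lia|unfold special_pair; lia|rsimp|rsimp].
      * eapply (Arr_gen n xi f k i q (p+1)); [lia|exact Hd|exact Hq|lia|unfold special_pair; lia|rsimp|rsimp].
    + assert (Hd : Ihat n xi (2*n-1-k) (p+1)).
      { apply (diamond n xi Ha (2*n-1-i)); [lia|lia| replace (p+1-1) with p by lia; auto
          | replace (p+1+1) with q by lia; auto]. }
      split; [|split].
      * eapply Ibar_v; [exact Hd| rsimp].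
      * eapply (Arr_gen n xi f (2*n-1-i) (2*n-1-k) (p+1) p); [lia|exact Hp|exact Hd|lia|unfold special_pair; lia|rsimp|rsimp].
      * eapply (Arr_gen n xi f (2*n-1-k) (2*n-1-i) q (p+1)); [lia|exact Hd|exact Hq|lia|unfold special_pair; lia|rsimp|rsimp].
  - clear H1 H2. intros w (u & u' & _ & _ & Hu & Hw & HA).
    unfold UpsArr, GammaArr, special_pair, Ihat in HA. norm.
    all: first [ lia | match goal with |- exists k, _ /\ _ /\ (?X, ?Y) = (k, _) =>
        exists X; split; [lia| split; [lia| f_equal; lia]] end ].
  - clear H1 H2. intros w (u & u' & _ & _ & Hu & Hw & HA).
    unfold UpsArr, GammaArr, special_pair, Ihat in HA. norm.
    all: first [ lia | match goal with |- exists k, _ /\ _ /\ (?X, ?Y) = (k, _) =>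
        exists X; split; [lia| split; [lia| f_equal; lia]] end ].
Qed.



Lemma part2 n xi f : 2 <= n -> adj n xi -> forall r,
  Ibar n xi f (n-1, r-2) -> Ibar n xi f (n-1, r+2) ->
     (1 <= n-2 -> Ibar n xi f (n-2, r)) /\ Ibar n xi f (n, r-1) /\ Ibar n xi f (n, r+1)
     /\ (1 <= n-2 -> Arr n xi f (n-1, r-2) (n-2, r)) /\ Arr n xi f (n-1, r-2) (n, r-1)
     /\ (1 <= n-2 -> Arr n xi f (n-2, r) (n-1, r+2)) /\ Arr n xi f (n, r+1) (n-1, r+2)
     /\ (forall w, Arr n xi f (n-1, r-2) w ->
           w = (n, r-1) \/ (1 <= n-2 /\ w = (n-2, r)))
     /\ (forall w, Arr n xi f w (n-1, r+2) ->
           w = (n, r+1) \/ (1 <= n-2 /\ w = (n-2, r))).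
Proof.
  intros Hn Ha r H1 H2.
  assert (X1 : forall w, Arr n xi f (n-1, r-2) w ->
           w = (n, r-1) \/ (1 <= n-2 /\ w = (n-2, r))).
  { clear H1 H2. intros w (u & u' & _ & _ & Hu & Hw & HA).
    unfold UpsArr, GammaArr, special_pair, Ihat in HA. norm.
    all: first [ lia | left; f_equal; lia | right; split; [lia | f_equal; lia] ]. }
  assert (X2 : forall w, Arr n xi f w (n-1, r+2) ->
           w = (n, r+1) \/ (1 <= n-2 /\ w = (n-2, r))).
  { clear H1 H2 X1. intros w (u & u' & _ & _ & Hw & Hu & HA).
    unfold UpsArr, GammaArr, special_pair, Ihat in HA. norm.
    all: first [ lia | left; f_equal; lia | right; split; [lia | f_equal; lia] ]. }
  apply Ibar_lo_inv in H1; [|lia]. apply Ibar_lo_inv in H2; [|lia].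
  destruct H1 as (i0 & p & Hp & Er & Hi0). destruct H2 as (i1 & q & Hq & Eq & Hi1).
  assert (i0 = i1) by (apply (same_row n xi (n-1) i0 i1 p q); auto; lia). subst i1.
  assert (Er' : r = 2*(p+1)) by lia. subst r.
  replace (2*n-1-(n-1)) with n in Hi0 by lia.
  destruct Hi0 as [-> | ->].
  - assert (Hd : forall k, 1 <= k -> (k = n-2 \/ k = n) -> Ihat n xi k (p+1)).
    { intros k Hk1 Hk. apply (diamond n xi Ha (n-1)); [lia|lia| replace (p+1-1) with p by lia; auto
          | replace (p+1+1) with q by lia; auto]. }
    split; [|split; [|split; [|split; [|split; [|split; [|split]]]]]]; auto.
    + intros H. eapply (Ibar_v n xi f (n-2) (p+1)); [apply Hd; lia| rsimp].
    + eapply (Ibar_mid n xi f (n-1) n (p+1) p); [lia|exact Hp|apply Hd; lia|unfold special_pair; lia|f_equal; lia].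
    + eapply (Ibar_mid n xi f n (n-1) q (p+1)); [lia|apply Hd; lia|exact Hq|unfold special_pair; lia|f_equal; lia].
    + intros H. eapply (Arr_gen n xi f (n-1) (n-2) (p+1) p); [lia|exact Hp|apply Hd; lia|lia|unfold special_pair; lia|rsimp|rsimp].
    + eapply (Arr_mid1 n xi f (n-1) n (p+1) p); [lia|exact Hp|apply Hd; lia|unfold special_pair; lia|rsimp|f_equal; lia].
    + intros H. eapply (Arr_gen n xi f (n-2) (n-1) q (p+1)); [lia|apply Hd; lia|exact Hq|lia|unfold special_pair; lia|rsimp|rsimp].
    + eapply (Arr_mid2 n xi f n (n-1) q (p+1)); [lia|apply Hd; lia|exact Hq|unfold special_pair; lia|f_equal; lia|rsimp].
  - assert (Hd : forall k, k <= 2*n-2 -> (k = n-1 \/ k = n+1) -> Ihat n xi k (p+1)).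
    { intros k Hk1 Hk. apply (diamond n xi Ha n); [lia|lia| replace (p+1-1) with p by lia; auto
          | replace (p+1+1) with q by lia; auto]. }
    split; [|split; [|split; [|split; [|split; [|split; [|split]]]]]]; auto.
    + intros H. eapply (Ibar_v n xi f (n+1) (p+1)); [apply Hd; lia| rsimp].
    + eapply (Ibar_mid n xi f n (n-1) (p+1) p); [lia|exact Hp|apply Hd; lia|unfold special_pair; lia|f_equal; lia].
    + eapply (Ibar_mid n xi f (n-1) n q (p+1)); [lia|apply Hd; lia|exact Hq|unfold special_pair; lia|f_equal; lia].
    + intros H. eapply (Arr_gen n xi f n (n+1) (p+1) p); [lia|exact Hp|apply Hd; lia|lia|unfold special_pair; lia|rsimp|rsimp].
    + eapply (Arr_mid1 n xi f n (n-1) (p+1) p); [lia|exact Hp|apply Hd; lia|unfold special_pair; lia|rsimp|f_equal; lia].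
    + intros H. eapply (Arr_gen n xi f (n+1) n q (p+1)); [lia|apply Hd; lia|exact Hq|lia|unfold special_pair; lia|rsimp|rsimp].
    + eapply (Arr_mid2 n xi f (n-1) n q (p+1)); [lia|apply Hd; lia|exact Hq|unfold special_pair; lia|f_equal; lia|rsimp].
Qed.


Lemma part3_core n xi f P : 2 <= n -> adj n xi ->
  Z.max (xi (n-1)) (xi n) - 2*n + 2 <= P <= Z.max (xi (n-1)) (xi n) ->
  (P = Z.max (xi (n-1)) (xi n) - 2*n + 2 -> f = Lt) ->
  (P = Z.max (xi (n-1)) (xi n) -> f = Gt) ->
  Ibar n xi f (n-1, 2*P) /\ Arr n xi f (n, 2*P-1) (n-1, 2*P) /\ Arr n xi f (n-1, 2*P) (n, 2*P+1).
Proof.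
  intros Hn Ha HP HL HG.
  assert (Hm : midP n xi P) by (rewrite midP_iff; auto).
  assert (Hi : exists i, (i = n-1 \/ i = n) /\ Ihat n xi i P)
    by (destruct Hm; [exists (n-1)|exists n]; auto).
  destruct Hi as (i & Hi & Hip).
  split; [|split].
  - eapply (Ibar_v n xi f i P); [exact Hip|]. destruct Hi as [-> | ->]; rsimp.
  - destruct (Z.eq_dec P (Z.max (xi (n-1)) (xi n) - 2*n + 2)).
    + eapply (Arr_Lt n xi f i P); auto; [apply is_rm_iff; auto | destruct Hi as [-> | ->]; rsimp].
    + destruct (mid_arr n xi P) as (j & i' & (G1 & G2 & _) & S); auto; try lia.
      destruct S as [[-> ->]|[-> ->]].
      * eapply (Arr_mid2 n xi f n (n-1) P (P-1)); auto; [unfold special_pair; lia|rsimp].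
      * eapply (Arr_mid2 n xi f (n-1) n P (P-1)); auto; [unfold special_pair; lia|rsimp].
  - destruct (Z.eq_dec P (Z.max (xi (n-1)) (xi n))).
    + eapply (Arr_Gt n xi f i P); auto; [apply is_rM_iff; auto | destruct Hi as [-> | ->]; rsimp].
    + destruct (mid_arr n xi (P+1)) as (j & i' & (G1 & G2 & _) & S); auto; try lia.
      destruct S as [[-> ->]|[-> ->]].
      * eapply (Arr_mid1 n xi f n (n-1) (P+1) (P+1-1)); auto; [unfold special_pair; lia|rsimp|f_equal; lia].
      * eapply (Arr_mid1 n xi f (n-1) n (P+1) (P+1-1)); auto; [unfold special_pair; lia|rsimp|f_equal; lia].
Qed.

Lemma part3 n xi f : 2 <= n -> adj n xi -> forall r,
  Ibar n xi f (n, r-1) -> Ibar n xi f (n, r+1) ->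
     Ibar n xi f (n-1, r) /\ Arr n xi f (n, r-1) (n-1, r) /\ Arr n xi f (n-1, r) (n, r+1)
     /\ (forall w, Arr n xi f (n, r-1) w -> w = (n-1, r))
     /\ (forall w, Arr n xi f w (n, r+1) -> w = (n-1, r)).
Proof.
  intros Hn Ha r H1 H2.
  assert (X1 : forall w, Arr n xi f (n, r-1) w -> w = (n-1, r)).
  { clear H1 H2. intros w (u & u' & _ & _ & Hu & Hw & HA).
    unfold UpsArr, GammaArr, special_pair, Ihat in HA. norm.
    all: first [ lia | f_equal; lia ]. }
  assert (X2 : forall w, Arr n xi f w (n, r+1) -> w = (n-1, r)).
  { clear H1 H2 X1. intros w (u & u' & _ & _ & Hw & Hu & HA).
    unfold UpsArr, GammaArr, special_pair, Ihat in HA. norm.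
    all: first [ lia | f_equal; lia ]. }
  apply Ibar_n_inv, Itw_n_inv in H1; auto. apply Ibar_n_inv, Itw_n_inv in H2; auto.
  cut (exists P, r = 2*P /\ Z.max (xi (n-1)) (xi n) - 2*n + 2 <= P <= Z.max (xi (n-1)) (xi n) /\
  (P = Z.max (xi (n-1)) (xi n) - 2*n + 2 -> f = Lt) /\
  (P = Z.max (xi (n-1)) (xi n) -> f = Gt)).
  { intros (P & -> & R & L & G). destruct (part3_core n xi f P) as (A1 & A2 & A3); auto. }
  destruct H1 as [(p & E1 & R1)|[(F1 & E1)|(F1 & E1)]];
  destruct H2 as [(q & E2 & R2)|[(F2 & E2)|(F2 & E2)]]; try lia; try congruence.
  - exists p. split; [lia|]. split; [lia|]. split; intros; lia.
  - exists p. split; [lia|]. split; [lia|]. split; intros; [lia|auto].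
  - exists (Z.max (xi (n-1)) (xi n) - 2*n + 2). split; [lia|]. split; [lia|]. split; intros; [auto|lia].
Qed.

Lemma part0 n xi f : 2 <= n -> adj n xi -> forall k, 1 <= k <= 2*n-1 ->
     (k <> n -> is_segment 4 (fun r => Itw n xi f (k, r))) /\
     (k = n -> is_segment 2 (fun r => Itw n xi f (k, r))).
Proof.
  intros Hn Ha k Hk. split.
  - intros Hkn. destruct (Z.le_gt_cases k (n-1)).
    + eapply seg_ext; [intros r; apply Itw_lo_iff; lia| apply row_segment; auto; lia].
    + eapply seg_ext; [intros r; apply Itw_hi_iff; lia| apply row_segment; auto; lia].
  - intros ->. destruct f.
    + exists (2*(Z.max (xi (n-1)) (xi n) - 2*n + 3) - 1), (2*n-2). split; [lia|]. intros r; split.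
      * intros H. apply Itw_n_inv in H; auto.
        destruct H as [(p & -> & Hp)|[(_ & ->)|(H & _)]];
          [exists (p - (Z.max (xi (n-1)) (xi n) - 2*n + 3)); split; lia
          | exists (2*n-2); split; lia | discriminate].
      * intros (s & Hs & ->). destruct (Z.eq_dec s (2*n-2)).
        -- right; right; left. split; auto. exists (Z.max (xi (n-1)) (xi n)).
           split; [apply is_rM_iff; auto|]. f_equal; lia.
        -- destruct (mid_arr n xi (Z.max (xi (n-1)) (xi n) - 2*n + 3 + s)) as (j & i & G & S); auto; try lia.
           right; left. exists j, i, (Z.max (xi (n-1)) (xi n) - 2*n + 3 + s). split; auto. split; auto. f_equal; lia.
    + exists (2*(Z.max (xi (n-1)) (xi n) - 2*n + 2) - 1), (2*n-2). split; [lia|]. intros r; split.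
      * intros H. apply Itw_n_inv in H; auto.
        destruct H as [(p & -> & Hp)|[(H & _)|(_ & ->)]];
          [exists (p - (Z.max (xi (n-1)) (xi n) - 2*n + 2)); split; lia
          | discriminate | exists 0; split; lia].
      * intros (s & Hs & ->). destruct (Z.eq_dec s 0).
        -- right; right; right. split; auto. exists (Z.max (xi (n-1)) (xi n) - 2*n + 2).
           split; [apply is_rm_iff; auto|]. f_equal; lia.
        -- destruct (mid_arr n xi (Z.max (xi (n-1)) (xi n) - 2*n + 2 + s)) as (j & i & G & S); auto; try lia.
           right; left. exists j, i, (Z.max (xi (n-1)) (xi n) - 2*n + 2 + s). split; auto. split; auto. f_equal; lia.
Qed.

Theorem lemma3p22 (n : Z) (Q : Z -> bool) (xi : Z -> Z) (f : flat) :
  2 <= n -> is_height n Q xi ->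
  (forall k, 1 <= k <= 2*n-1 ->
     (k <> n -> is_segment 4 (fun r => Itw n xi f (k, r))) /\
     (k = n -> is_segment 2 (fun r => Itw n xi f (k, r))))
  /\
  (* (1) *)
  (forall i r, i <= n-2 -> Ibar n xi f (i, r-2) -> Ibar n xi f (i, r+2) ->
     (forall k, (k = i-1 \/ k = i+1) -> 1 <= k ->
        Ibar n xi f (k, r) /\ Arr n xi f (i, r-2) (k, r) /\ Arr n xi f (k, r) (i, r+2))
     /\ (forall w, Arr n xi f (i, r-2) w ->
           exists k, (k = i-1 \/ k = i+1) /\ 1 <= k /\ w = (k, r))
     /\ (forall w, Arr n xi f w (i, r+2) ->
           exists k, (k = i-1 \/ k = i+1) /\ 1 <= k /\ w = (k, r)))
  /\
  (* (2) *)
  (forall r, Ibar n xi f (n-1, r-2) -> Ibar n xi f (n-1, r+2) ->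
     (1 <= n-2 -> Ibar n xi f (n-2, r)) /\ Ibar n xi f (n, r-1) /\ Ibar n xi f (n, r+1)
     /\ (1 <= n-2 -> Arr n xi f (n-1, r-2) (n-2, r)) /\ Arr n xi f (n-1, r-2) (n, r-1)
     /\ (1 <= n-2 -> Arr n xi f (n-2, r) (n-1, r+2)) /\ Arr n xi f (n, r+1) (n-1, r+2)
     /\ (forall w, Arr n xi f (n-1, r-2) w ->
           w = (n, r-1) \/ (1 <= n-2 /\ w = (n-2, r)))
     /\ (forall w, Arr n xi f w (n-1, r+2) ->
           w = (n, r+1) \/ (1 <= n-2 /\ w = (n-2, r))))
  /\
  (* (3) *)
  (forall r, Ibar n xi f (n, r-1) -> Ibar n xi f (n, r+1) ->
     Ibar n xi f (n-1, r) /\ Arr n xi f (n, r-1) (n-1, r) /\ Arr n xi f (n-1, r) (n, r+1)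
     /\ (forall w, Arr n xi f (n, r-1) w -> w = (n-1, r))
     /\ (forall w, Arr n xi f w (n, r+1) -> w = (n-1, r))).
Proof.
  intros Hn Hh. pose proof (height_adj n Q xi Hh) as Ha.
  split; [apply part0; auto|]. split; [apply part1; auto|].
  split; [apply part2; auto| apply part3; auto].
Qed.
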